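(* Let $\mathcal{P}=\{1,\dots,M\}$, $i\in\mathcal{P}$, $i'\notin\mathcal{P}$, $\mathcal{P}^R=\mathcal{P}\cup\{i'\}$. Let $g\colon2^{\mathcal{P}^R}\to\mathbb{R}_{\ge0}$ be monotone, supermodular, and replication-invariant ($g(T\cup\{i,i'\})=g(T\cup\{i\})=g(T\cup\{i'\})$ for all $T\subseteq\mathcal{P}^R$), with $g(\mathcal{P})>0$. Let $v(S)=g(S)+\sum_{j\in S}(g(S)-g(\{j\}))$ for $S\subseteq\mathcal{P}^R$, let $a_j=g(\mathcal{P})-g(\{j\})$ for $j\in\mathcal{P}$, and $A=\sum_{j\in\mathcal{P}}a_j$; assume $A>0$. Let $\phi(i)$ be the normalized Shapley value of $i$ for $v$ restricted to $2^{\mathcal{P}}$ and $\phi^R(i)$ the normalized Shapley value of $i$ for $v$ on $2^{\mathcal{P}^R}$. Then $$\phi^R(i)\le\frac{\phi(i)A+a_i}{2(A+a_i)},$$ i.e. the combined payoff $t^R=2(\phi^R(i)(A+a_i)-a_i)$ of $i$ and its replica does not exceed $i$'s payoff $t=\phi(i)A-a_i$ in the original market.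
   Context: Normalized Shapley values: $\phi(i)=\frac{1}{v(\mathcal{P})}\sum_{S\subseteq\mathcal{P}\setminus\{i\}}\frac{|S|!(M-|S|-1)!}{M!}\big(v(S\cup\{i\})-v(S)\big)$ and $\phi^R(i)=\frac{1}{v(\mathcal{P}^R)}\sum_{S\subseteq\mathcal{P}^R\setminus\{i\}}\frac{|S|!(M-|S|)!}{(M+1)!}\big(v(S\cup\{i\})-v(S)\big)$. Market setting: all parties share one validation set $V$; $g(S)$ is the performance on $V$ of the model trained on the pooled data of $S$; $a_j$ is party $j$'s gain from the market; party $j$ receives payout $A\,\phi(j)$ and pays $a_j$. The replica $i'$ has the same data as $i$. *)

(* Defs.v *)
From HB Require Import structures.
From mathcomp Require Import all_boot all_order all_algebra.
Set Implicit Arguments. Unset Strict Implicit. Unset Printing Implicit Defensive.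
Import Order.TTheory GRing.Theory Num.Theory.
Local Open Scope ring_scope.

Definition shapley_norm (R : realFieldType) (T : finType)
  (v : {set T} -> R) (N : {set T}) (i : T) : R :=
  (v N)^-1 * \sum_(S in powerset (N :\ i))
     ((#|S|`! * (#|N| - #|S| - 1)`!)%:R / (#|N|`!)%:R) * (v (S :|: [set i]) - v S).

Definition set_monotone (R : realFieldType) (T : finType) (g : {set T} -> R) :=
  forall S U : {set T}, S \subset U -> g S <= g U.

Definition supermodular (R : realFieldType) (T : finType) (g : {set T} -> R) :=
  forall S U : {set T}, g S + g U <= g (S :|: U) + g (S :&: U).

Definition market_v (R : realFieldType) (T : finType) (g : {set T} -> R)
  (S : {set T}) : R :=
  g S + \sum_(j in S) (g S - g [set j]).

(* Main.v *)
Require Import Defs.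
From HB Require Import structures.
From mathcomp Require Import all_boot all_order all_algebra.
From mathcomp Require Import ring lra zify.
From Stdlib Require Import Lia.
Set Implicit Arguments. Unset Strict Implicit. Unset Printing Implicit Defensive.
Import Order.TTheory GRing.Theory Num.Theory.
Local Open Scope ring_scope.
Definition wt (R : realFieldType) (n s : nat) : R :=
  (s`! * (n - s - 1)`!)%:R / (n`!)%:R.

Lemma wt_rec (R : realFieldType) n s : (s < n)%N ->
  wt R n.+1 s + wt R n.+1 s.+1 = wt R n s.
Proof.
move=> sn; rewrite /wt.
have -> : n = (s + (n - s - 1)).+1 by lia.
set k := (n - s - 1)%N.
have -> : ((s + k).+2 - s - 1 = k.+1)%N by lia.
have -> : ((s + k).+2 - s.+1 - 1 = k)%N by lia.
rewrite (factS k) (factS s) (factS (s+k).+1).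
have := fact_gt0 s; have := fact_gt0 k; have := fact_gt0 (s+k).+1.
move: (s`!) (k`!) ((s+k).+1`!) => fs fk fc hc hk hs.
have h1 : fs%:R != 0 :> R by rewrite pnatr_eq0 -lt0n.
have h2 : fk%:R != 0 :> R by rewrite pnatr_eq0 -lt0n.
have h3 : fc%:R != 0 :> R by rewrite pnatr_eq0 -lt0n.
have e : ((s+k).+2)%:R = (k.+1)%:R + (s.+1)%:R :> R by rewrite -natrD; congr (_%:R); lia.
have h4 : (k.+1)%:R + (s.+1)%:R != 0 :> R by rewrite -natrD pnatr_eq0.
rewrite !natrM e; move: h1 h2 h3 h4.
move: (fs%:R) (fk%:R) (fc%:R) (k.+1%:R) (s.+1%:R) => a b c x y h1 h2 h3 h4.
by field; rewrite h3 h4.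
Qed.
Lemma sum_powU1 (T : finType) (R : nmodType) (x : T) (B : {set T}) (F : {set T} -> R) :
  x \notin B ->
  \sum_(S in powerset (x |: B)) F S = \sum_(S in powerset B) (F S + F (x |: S)).
Proof.
move=> xB; rewrite big_split /= (bigID [pred S : {set T} | x \in S] (mem (powerset (x |: B)))) /= addrC; congr (_ + _).
  apply: eq_bigl => S; rewrite !powersetE.
  apply/andP/idP => [[sS xS]|sS]; last first.
    rewrite (subset_trans sS (subsetUr _ _)); split => //; apply/negP => /(subsetP sS); by rewrite (negPf xB).
  apply/subsetP => y yS; have := subsetP sS y yS; rewrite in_setU1 => /orP[/eqP ey|//].
  by move: xS; rewrite -ey yS.
rewrite (reindex_onto (fun S => x |: S) (fun S => S :\ x)) /=; last first.
  by move=> S /andP[_ xS]; rewrite setD1K.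
apply: eq_bigl => S; rewrite !powersetE setU11 andbT.
apply/andP/idP => [[sS /eqP eS]|sS].
  apply/subsetP => y yS; have : y \in x |: B by apply: (subsetP sS); rewrite in_setU1 yS orbT.
  rewrite in_setU1 => /orP[/eqP ey|//].
  by move: yS; rewrite -eS ey setD11.
have xS : x \notin S by apply/negP => /(subsetP sS); rewrite (negPf xB).
by split; [rewrite setUS | rewrite setU1K].
Qed.

Lemma wsum (R : realFieldType) (T : finType) (n : nat) (B : {set T}) :
  #|B| = n -> \sum_(S in powerset B) wt R (#|B|.+1) #|S| = 1.
Proof.
elim: n B => [|n IH] B cB.
  move/eqP: cB; rewrite cards_eq0 => /eqP ->.
  by rewrite powerset0 big_set1 cards0 /wt /= divr1.
have : (0 < #|B|)%N by rewrite cB.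
case/card_gt0P => x xB.
have eB : B = x |: (B :\ x) by rewrite setD1K.
have cB' : #|B :\ x| = n by move: cB; rewrite (cardsD1 x B) xB add1n => -[].
rewrite eB sum_powU1 ?setD11 //.
rewrite -[RHS](IH (B :\ x) cB'); apply: eq_bigr => S; rewrite powersetE => sS.
have xS : x \notin S by apply/negP => /(subsetP sS); rewrite setD11.
have -> : #|x |: B :\ x| = #|B :\ x|.+1 by rewrite -eB cB cB'.
rewrite [#|x |: S|]cardsU1 xS add1n wt_rec // ltnS subset_leq_card //.
Qed.

Lemma final_ineq (R : realFieldType) (A G g0 X : R) :
  0 < A -> 0 <= g0 -> g0 <= G -> 0 <= X -> X <= G - g0 ->
  (G + (G - g0) + A)^-1 * X <=
  ((G + A)^-1 * X * A + (G - g0)) / (2%:R * (A + (G - g0))).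
Proof.
move=> A0 g00 g0G X0 XG; rewrite -subr_ge0.
have hB : 0 < G + A by lra.
have hC : 0 < G + (G - g0) + A by lra.
have hD : 0 < 2%:R * (A + (G - g0)) by lra.
have -> : ((G + A)^-1 * X * A + (G - g0)) / (2%:R * (A + (G - g0))) - (G + (G - g0) + A)^-1 * X
  = ((G - g0 - X) * (G + A) * (G + A + (G - g0)) + X * G * (g0 + A)) /
    ((G + A) * (G + (G - g0) + A) * (2%:R * (A + (G - g0)))).
  by field; rewrite !lt0r_neq0 //; lra.
apply: divr_ge0; last by apply: mulr_ge0; [apply: mulr_ge0|]; lra.
apply: addr_ge0; apply: mulr_ge0; try apply: mulr_ge0; lra.
Qed.

Ltac setsolve i T hi hn :=
  let j := fresh "j" in let ne := fresh "ne" in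
  apply/setP; case=> [j|]; rewrite !inE /=;
  [ have -> : (Some j == None) = false by [];
    have -> : (Some j == Some i) = (j == i) by [];
    case: (eqVneq j i) => [->|ne]; rewrite ?eqxx ?(negPf ne) /=;
    try rewrite hi; try rewrite (negPf hi); try rewrite hn; try rewrite (negPf hn);
    by case: (Some j \in T)
  | try rewrite hi; try rewrite (negPf hi); try rewrite hn; try rewrite (negPf hn); by [] ].

Theorem theorem1 (R : realFieldType) (M : nat) (i : 'I_M)
  (g : {set option 'I_M} -> R)
  (g_nonneg : forall S, 0 <= g S)
  (g_mono : set_monotone g)
  (g_super : supermodular g)
  (g_repl1 : forall U : {set option 'I_M},
      g (U :|: [set Some i; None]) = g (U :|: [set Some i]))
  (g_repl2 : forall U : {set option 'I_M},
      g (U :|: [set Some i]) = g (U :|: [set None]))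
  (gP_pos : 0 < g [set Some j | j : 'I_M]) :
  let P : {set option 'I_M} := [set Some j | j : 'I_M] in
  let PR : {set option 'I_M} := [set: option 'I_M] in
  let v := market_v g in
  let a := fun j : option 'I_M => g P - g [set j] in
  let A := \sum_(j in P) a j in
  0 < A ->
  shapley_norm v PR (Some i) <=
    (shapley_norm v P (Some i) * A + a (Some i)) / (2%:R * (A + a (Some i))).
Proof.
move=> P PR v a A A0.
set D : {set option 'I_M} := [set Some i; None].
have null : forall U, g (U :\: D :|: [set Some i]) = g (U :\: D) /\
                     g (U :\: D :|: [set None]) = g (U :\: D).
  move=> U; set T' := U :\: D.
  have h := g_super (T' :|: [set Some i]) (T' :|: [set None]).
  have e1 : (T' :|: [set Some i]) :|: (T' :|: [set None]) = T' :|: D.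
    by apply/setP => y; rewrite !inE; case: (y == Some i); case: (y == None); case: (y \in U).
  have e2 : (T' :|: [set Some i]) :&: (T' :|: [set None]) = T'.
    apply/setP => y; rewrite !inE; case: y => [j|] //=.
    have -> : (Some j == None) = false by [].
    by case: (Some j == Some i); case: (Some j \in U).
  rewrite e1 e2 g_repl1 -g_repl2 in h.
  have m1 : g T' <= g (T' :|: [set Some i]) by apply: g_mono; rewrite subsetUl.
  rewrite -g_repl2; split; lra.
have gD : forall T, g T = g (T :\: D).
  move=> T; have [n1 n2] := null T.
  have [hi|hi] := boolP (Some i \in T); have [hn|hn] := boolP (None \in T).
  - transitivity (g (T :\: D :|: D)); first by congr g; setsolve i T hi hn.
    by rewrite g_repl1 n1.
  - transitivity (g (T :\: D :|: [set Some i])); first by congr g; setsolve i T hi hn.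
    by rewrite n1.
  - transitivity (g (T :\: D :|: [set None])); first by congr g; setsolve i T hi hn.
    by rewrite n2.
  - by congr g; setsolve i T hi hn.
have gUi : forall S, g (S :|: [set Some i]) = g S.
  move=> S; rewrite gD [RHS]gD; congr g; rewrite setDUl.
  have -> : [set Some i] :\: D = set0 by apply/eqP; rewrite setD_eq0 sub1set !inE eqxx.
  by rewrite setU0.
have gUn : forall S, g (S :|: [set None]) = g S.
  move=> S; rewrite gD [RHS]gD; congr g; rewrite setDUl.
  have -> : [set None] :\: D = set0 by apply/eqP; rewrite setD_eq0 sub1set !inE eqxx orbT.
  by rewrite setU0.
have g1i : g [set Some i] = g set0 by rewrite -(set0U [set Some i]) gUi.
have g1n : g [set None] = g set0 by rewrite -(set0U [set None]) gUn.
have marg : forall S : {set option 'I_M}, Some i \notin S -> v (S :|: [set Some i]) - v S = g S - g set0.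
  move=> S hS; rewrite /v /market_v.
  have e : S :|: [set Some i] = Some i |: S by rewrite setUC.
  rewrite e big_setU1 //= -e gUi g1i; lra.
have inP : forall j, Some j \in P by move=> j; apply/imsetP; exists j.
have nP : None \notin P by apply/imsetP => -[j].
have cP : #|P| = M.
  by rewrite card_imset; [rewrite card_ord | exact: Some_inj].
have cPR : #|PR| = M.+1 by rewrite cardsT card_option card_ord.
have ePR : PR = None |: P.
  by apply/setP => -[j|]; rewrite !inE ?inP ?eqxx.
have ePR' : PR :\ Some i = None |: (P :\ Some i).
  by apply/setP => -[j|]; rewrite !inE ?inP ?eqxx.
have shE : forall N x, shapley_norm v N x = (v N)^-1 *
   \sum_(S in powerset (N :\ x)) wt R #|N| #|S| * (v (S :|: [set x]) - v S) by [].
set X := \sum_(S in powerset (P :\ Some i)) wt R M #|S| * (g S - g set0).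
have nSi : forall S : {set option 'I_M}, S \in powerset (P :\ Some i) -> Some i \notin S.
  by move=> S; rewrite powersetE => sS; apply/negP => /(subsetP sS); rewrite setD11.
have XP : \sum_(S in powerset (P :\ Some i)) wt R #|P| #|S| * (v (S :|: [set Some i]) - v S) = X.
  by rewrite [#|P|]cP; apply: eq_bigr => S hS; rewrite marg // nSi.
have cP' : #|P :\ Some i|.+1 = M by have := cardsD1 (Some i) P; rewrite inP cP add1n => h; exact: esym h.
have XR : \sum_(S in powerset (PR :\ Some i)) wt R #|PR| #|S| * (v (S :|: [set Some i]) - v S) = X.
  rewrite [#|PR|]cPR ePR' sum_powU1; last by rewrite !inE negb_and nP orbT.
  apply: eq_bigr => S hS; have := hS; rewrite powersetE => sS.
  have nS : None \notin S by apply/negP => /(subsetP sS); rewrite !inE (negPf nP) andbF.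
  rewrite (marg S (nSi S hS)) marg; last by rewrite in_setU1 negb_or (nSi S hS) andbT.
  rewrite cardsU1 nS add1n [None |: S]setUC gUn -mulrDl wt_rec //.
  by have := subset_leq_card sS; rewrite -ltnS cP'.
have vP : v P = g P + A by [].
have gPR : g PR = g P.
  rewrite gD [RHS]gD; congr g; apply/setP => -[j|]; rewrite !inE ?inP //.
have vPR : v PR = g P + (g P - g set0) + A.
  rewrite /v /market_v gPR ePR big_setU1 //= g1n /A /a; lra.
have ai : a (Some i) = g P - g set0 by rewrite /a g1i.
have g0G : g set0 <= g P by apply: g_mono; rewrite sub0set.
have X0 : 0 <= X.
  apply: sumr_ge0 => S hS; apply: mulr_ge0; first by rewrite /wt divr_ge0 ?ler0n.
  by rewrite subr_ge0; apply: g_mono; rewrite sub0set.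
have XG : X <= g P - g set0.
  rewrite -[g P - g set0]mul1r -(wsum R (B := P :\ Some i) (erefl _)) cP' big_distrl /=.
  apply: ler_sum => S; rewrite powersetE => sS; apply: ler_wpM2l; first by rewrite /wt divr_ge0 ?ler0n.
  by rewrite lerB //; apply: g_mono; apply: (subset_trans sS); apply: subD1set.
rewrite !shE XP XR vP vPR ai.
apply: final_ineq => //; exact: g_nonneg.
Qed.
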